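(* Let $\mathcal{T}$ be a compact interval, $\boldsymbol{\phi}=(\phi_1,\dots,\phi_m)'$ linearly independent functions in $L^2(\mathcal{T})$, and let $\mathbf{X}(t)=\mathbf{A}'\boldsymbol{\phi}(t)$ be a rank-$M$ ($M=mp$) $p$-variate process with separable covariance $\mathbf{K}(s,t)=\boldsymbol{\Sigma}^{\mathrm{row}}\kappa(s,t)$, random coefficient matrix $\mathbf{A}=(\mathbf{a}_1,\dots,\mathbf{a}_p)\in\mathbb{R}^{m\times p}$, mean $\boldsymbol{\mu}(t)=\mathbf{M}_{\mathbf{A}}'\boldsymbol{\phi}(t)$ with $\mathbf{M}_{\mathbf{A}}=(\mathbf{m}_{\mathbf{A},1},\dots,\mathbf{m}_{\mathbf{A},p})=E\mathbf{A}$, and $\kappa(s,t)=\boldsymbol{\phi}'(s)\boldsymbol{\Sigma}^{\mathrm{col}}\boldsymbol{\phi}(t)$ with $\boldsymbol{\Sigma}^{\mathrm{col}}$ positive definite. Let $(\lambda^{\mathrm{row}}_j,\mathbf{v}^{\mathrm{row}}_j)$, $j=1,\dots,p$, be the eigenpairs of $\boldsymbol{\Sigma}^{\mathrm{row}}$ and $v^{\mathrm{row}}_{j,k}=\mathbf{e}_k'\mathbf{v}^{\mathrm{row}}_j$. Then for each $k\in\{1,\dots,p\}$, $$\theta_k(\mathbf{X},\boldsymbol{\mu};\mathbf{K},M)=\sum_{j=1}^p\frac{1}{\lambda^{\mathrm{row}}_j}v^{\mathrm{row}}_{j,k}(\mathbf{a}_k-\mathbf{m}_{\mathbf{A},k}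)'(\boldsymbol{\Sigma}^{\mathrm{col}})^{-1}(\mathbf{A}-\mathbf{M}_{\mathbf{A}})'\mathbf{v}^{\mathrm{row}}_j.$$
   Context: $\boldsymbol{\Sigma}^{\mathrm{row}}$ is $p\times p$ symmetric positive definite. The covariance operator $\mathcal{C}\mathbf{x}(s)=\int\mathbf{K}(s,t)\mathbf{x}(t)dt$ on $L^2(\mathcal{T})^p$ (inner product $\langle\mathbf{x},\mathbf{y}\rangle=\sum_j\int_{\mathcal{T}}x_jy_j$) has orthonormal eigenfunctions $\boldsymbol{\psi}_i$ and nonincreasing eigenvalues $\pi_i$; $\mathrm{fMMD}^2(\mathbf{Y},\boldsymbol{\mu};\mathbf{K},M)=\sum_{i=1}^M\pi_i^{-1}\langle\mathbf{Y}-\boldsymbol{\mu},\boldsymbol{\psi}_i\rangle^2$. With $P=\{1,\dots,p\}$, $\hat X^S_j=X_j$ if $j\in S$ and $\hat X^S_j=\mu_j$ otherwise, the coordinate Shapley contribution is $\theta_k(\mathbf{X},\boldsymbol{\mu};\mathbf{K},M)=\sum_{S\subseteq P\setminus\{k\}}\frac{|S|!(p-|S|-1)!}{p!}[\mathrm{fMMD}^2(\hat{\mathbf{X}}^{S\cup\{k\}},\boldsymbol{\mu};\mathbf{K},M)-\mathrm{fMMD}^2(\hat{\mathbf{X}}^S,\boldsymbol{\mu};\mathbf{K},M)]$. *)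

(* Defs.v *)
From HB Require Import structures.
From mathcomp Require Import all_boot all_order all_algebra.
From mathcomp Require Import all_classical all_reals all_analysis.

Set Implicit Arguments.
Unset Strict Implicit.
Unset Printing Implicit Defensive.
Import Order.TTheory GRing.Theory Num.Theory.
Import numFieldNormedType.Exports.

Local Open Scope classical_set_scope.
Local Open Scope ring_scope.

Section Defs.
Variable R : realType.

Definition L2fun (a b : R) (f : R -> R) : Prop :=
  measurable_fun `[a, b] f /\
  (@lebesgue_measure R).-integrable `[a, b] (fun t => (f t ^+ 2)%:E).

Definition L2vec (p : nat) (a b : R) (x : 'I_p -> R -> R) : Prop :=
  forall j, L2fun a b (x j).

Definition intT (a b : R) (f : R -> R) : R :=
  Rintegral (@lebesgue_measure R) `[a, b] f.

Definition ipv (p : nat) (a b : R) (x y : 'I_p -> R -> R) : R :=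
  \sum_(j < p) intT a b (fun t => x j t * y j t).

Definition lin_indep_L2 (m : nat) (a b : R) (phi : 'I_m -> R -> R) : Prop :=
  forall c : 'I_m -> R,
    intT a b (fun t => (\sum_(i < m) c i * phi i t) ^+ 2) = 0 ->
    forall i, c i = 0.

Definition posdef (n : nat) (S : 'M[R]_n) : Prop :=
  forall u : 'cV[R]_n, u != 0 -> 0 < (u^T *m S *m u) 0 0.

Definition kappa (m : nat) (Scol : 'M[R]_m) (phi : 'I_m -> R -> R) (s t : R) : R :=
  \sum_(i < m) \sum_(l < m) phi i s * Scol i l * phi l t.

Definition sepK (p : nat) (Srow : 'M[R]_p) (kap : R -> R -> R) (s t : R) : 'M[R]_p :=
  kap s t *: Srow.

Definition covop (p : nat) (a b : R) (K : R -> R -> 'M[R]_p)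
  (x : 'I_p -> R -> R) : 'I_p -> R -> R :=
  fun j s => \sum_(l < p) intT a b (fun t => K s t j l * x l t).

(* (psi_i, pi_i)_{i>=0}: a complete orthonormal system of eigenfunctions of C
   in L^2(T)^p with nonincreasing eigenvalues (spectral decomposition of C).
   The eigen-equation C psi_i = pi_i psi_i is understood in L^2 (the difference
   has zero L^2 norm). Index i = 0 corresponds to the paper's i = 1. *)
Definition spectral_decomp (p : nat) (a b : R) (K : R -> R -> 'M[R]_p)
  (psi : nat -> 'I_p -> R -> R) (pi : nat -> R) : Prop :=
  [/\ forall i, L2vec a b (psi i),
      forall i i', ipv a b (psi i) (psi i') = (i == i')%:R,
      forall i, let d := fun j s => covop a b K (psi i) j s - pi i * psi i j s in
                ipv a b d d = 0,
      forall i, pi i.+1 <= pi i &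
      forall x, L2vec a b x -> (forall i, ipv a b x (psi i) = 0) -> ipv a b x x = 0].

Definition fMMD2 (p : nat) (a b : R) (psi : nat -> 'I_p -> R -> R) (pi : nat -> R)
  (M : nat) (Y mu : 'I_p -> R -> R) : R :=
  \sum_(i < M) (pi i)^-1 * (ipv a b (fun j t => Y j t - mu j t) (psi i)) ^+ 2.

Definition hatX (p : nat) (S : {set 'I_p}) (X mu : 'I_p -> R -> R) : 'I_p -> R -> R :=
  fun j t => if j \in S then X j t else mu j t.

Definition theta (p : nat) (a b : R) (psi : nat -> 'I_p -> R -> R) (pi : nat -> R)
  (M : nat) (X mu : 'I_p -> R -> R) (k : 'I_p) : R :=
  \sum_(S : {set 'I_p} | k \notin S)
    ((#|S|)`!%:R * ((p - #|S| - 1)`!)%:R / (p`!)%:R) *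
    (fMMD2 a b psi pi M (hatX (k |: S) X mu) mu - fMMD2 a b psi pi M (hatX S X mu) mu).

End Defs.

(* Main.v *)
Require Import Defs.
From HB Require Import structures.
From mathcomp Require Import all_boot all_order all_algebra.
From mathcomp Require Import all_classical all_reals all_analysis.
From mathcomp Require Import ring lra zify.
Import Order.TTheory GRing.Theory Num.Theory.
Local Open Scope ring_scope.


Section L2.
Local Open Scope classical_set_scope.
Variable R : realType.
Variables a b : R.
Local Notation mu := (@lebesgue_measure R).

Definition Int (f : R -> R) := mu.-integrable `[a, b] (EFin \o f).

Lemma mI : measurable (`[a, b] : set (measurableTypeR R)).
Proof. exact: measurable_itv. Qed.

Lemma iext {F G : measurableTypeR R -> \bar R} : mu.-integrable `[a, b] F -> (forall x, F x = G x) ->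
  mu.-integrable `[a, b] G.
Proof. by move=> H e; have <- : F = G := funext e. Qed.

Lemma L2_Int_mul {f g} : L2fun a b f -> L2fun a b g -> Int (fun t => f t * g t).
Proof.
move=> [mf If] [mg Ig].
apply: (@le_integrable _ _ _ mu _ mI _ (fun t => (f t ^+ 2 + g t ^+ 2)%:E)).
- by apply/measurable_realfun.measurable_EFinP; exact: measurable_realfun.measurable_funM.
- move=> x _ /=; rewrite lee_fin [X in _ <= X]ger0_norm; last first.
    by apply: addr_ge0; apply: sqr_ge0.
  by rewrite ler_norml; apply/andP; split; nra.
- apply: (iext (integrableD mI If Ig)) => x /=.
  by rewrite EFinD.
Qed.

Lemma L2D {f g} : L2fun a b f -> L2fun a b g -> L2fun a b (fun t => f t + g t).
Proof.
move=> Lf Lg; have Ifg := L2_Int_mul Lf Lg.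
case: Lf Lg => mf If [mg Ig]; split; first exact: measurable_realfun.measurable_funD.
have H := integrableD mI (integrableD mI If (integrableZl mI 2 Ifg)) Ig.
apply: (iext H) => x /=.
by rewrite -EFinM -!EFinD; congr EFin; ring.
Qed.

Lemma L2Z c {f} : L2fun a b f -> L2fun a b (fun t => c * f t).
Proof.
move=> [mf If]; split; first by apply: measurable_realfun.measurable_funM => //; exact: measurable_cst.
apply: (iext (integrableZl mI (c ^+ 2) If)) => x /=.
by rewrite -EFinM exprMn.
Qed.

Lemma L20 : L2fun a b (fun _ => 0).
Proof.
split; first exact: measurable_cst.
apply: (iext (integrable0 mu _)) => x /=.
by rewrite expr0n.
Qed.

Lemma L2_sum (I0 : Type) (r : seq I0) (F : I0 -> R -> R) :
  (forall i, L2fun a b (F i)) -> L2fun a b (fun t => \sum_(i <- r) F i t).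
Proof.
move=> HF; elim: r => [|i r IH].
  have -> : (fun t => \sum_(i <- [::]) F i t) = (fun _ => 0).
    by apply/funext => t; rewrite big_nil.
  exact: L20.
have -> : (fun t => \sum_(j <- i :: r) F j t) = (fun t => F i t + \sum_(j <- r) F j t).
  by apply/funext => t; rewrite big_cons.
exact: L2D.
Qed.

Lemma IntD {f g} : Int f -> Int g -> Int (fun t => f t + g t).
Proof.
move=> If Ig; apply: (iext (integrableD mI If Ig)) => x /=.
by rewrite EFinD.
Qed.

Lemma IntZ c {f} : Int f -> Int (fun t => c * f t).
Proof.
move=> If; apply: (iext (integrableZl mI c If)) => x /=.
by rewrite EFinM.
Qed.

Lemma Int0 : Int (fun _ => 0).
Proof. by apply: (iext (integrable0 mu _)). Qed.

Lemma Int_sum (I0 : Type) (r : seq I0) (F : I0 -> R -> R) :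
  (forall i, Int (F i)) -> Int (fun t => \sum_(i <- r) F i t).
Proof.
move=> HF; elim: r => [|i r IH].
  have -> : (fun t => \sum_(i <- [::]) F i t) = (fun _ => 0).
    by apply/funext => t; rewrite big_nil.
  exact: Int0.
have -> : (fun t => \sum_(j <- i :: r) F j t) = (fun t => F i t + \sum_(j <- r) F j t).
  by apply/funext => t; rewrite big_cons.
exact: IntD.
Qed.

Lemma intTD {f g} : Int f -> Int g ->
  intT a b (fun t => f t + g t) = intT a b f + intT a b g.
Proof. by move=> If Ig; rewrite /intT RintegralD //; exact: mI. Qed.

Lemma intTZ c {f} : Int f -> intT a b (fun t => c * f t) = c * intT a b f.
Proof. by move=> If; rewrite /intT RintegralZl //; exact: mI. Qed.

Lemma intT_sum (I0 : Type) (r : seq I0) (F : I0 -> R -> R) :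
  (forall i, Int (F i)) ->
  intT a b (fun t => \sum_(i <- r) F i t) = \sum_(i <- r) intT a b (F i).
Proof.
move=> HF; elim: r => [|i r IH].
  rewrite big_nil; have -> : (fun t => \sum_(i <- [::]) F i t) = (fun _ => 0).
    by apply/funext => t; rewrite big_nil.
  by rewrite /intT Rintegral_cst ?mul0r //; exact: mI.
have -> : (fun t => \sum_(j <- i :: r) F j t) = (fun t => F i t + \sum_(j <- r) F j t).
  by apply/funext => t; rewrite big_cons.
by rewrite intTD ?big_cons ?IH //; exact: Int_sum.
Qed.

Lemma intT_ge0 f : (forall t, 0 <= f t) -> 0 <= intT a b f.
Proof. by move=> H; apply: Rintegral_ge0 => x _. Qed.

Lemma intT_ext f g : (forall t, f t = g t) -> intT a b f = intT a b g.
Proof. by move=> H; congr intT; apply/funext. Qed.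

End L2.


Section Vec.
Variable R : realType.
Variables a b : R.
Variable p : nat.
Implicit Types x y z d : 'I_p -> R -> R.

Lemma L2vD x y : L2vec a b x -> L2vec a b y -> L2vec a b (fun j t => x j t + y j t).
Proof. by move=> Hx Hy j; apply: L2D. Qed.

Lemma L2vZ c x : L2vec a b x -> L2vec a b (fun j t => c * x j t).
Proof. by move=> Hx j; apply: L2Z. Qed.

Lemma L2v_sum (I0 : Type) (r : seq I0) (c : I0 -> R) (z : I0 -> 'I_p -> R -> R) :
  (forall i, L2vec a b (z i)) -> L2vec a b (fun j t => \sum_(i <- r) c i * z i j t).
Proof. move=> Hz j; apply: (@L2_sum _ _ _ _ r (fun i t => c i * z i j t)) => i; apply: L2Z; exact: Hz. Qed.

Lemma ipv_sym x y : ipv a b x y = ipv a b y x.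
Proof. by rewrite /ipv; apply: eq_bigr => j _; apply: intT_ext => t; rewrite mulrC. Qed.

Lemma ipvDl x y z : L2vec a b x -> L2vec a b y -> L2vec a b z ->
  ipv a b (fun j t => x j t + y j t) z = ipv a b x z + ipv a b y z.
Proof.
move=> Hx Hy Hz; rewrite /ipv -big_split /=; apply: eq_bigr => j _.
rewrite -intTD; try exact: L2_Int_mul.
by apply: intT_ext => t; rewrite mulrDl.
Qed.

Lemma ipvZl c x z : L2vec a b x -> L2vec a b z ->
  ipv a b (fun j t => c * x j t) z = c * ipv a b x z.
Proof.
move=> Hx Hz; rewrite /ipv mulr_sumr; apply: eq_bigr => j _.
rewrite -intTZ; last exact: L2_Int_mul.
by apply: intT_ext => t; rewrite mulrA.
Qed.

Lemma ipv_suml (I0 : Type) (r : seq I0) (c : I0 -> R) (z : I0 -> 'I_p -> R -> R) y :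
  (forall i, L2vec a b (z i)) -> L2vec a b y ->
  ipv a b (fun j t => \sum_(i <- r) c i * z i j t) y = \sum_(i <- r) c i * ipv a b (z i) y.
Proof.
move=> Hz Hy; elim: r => [|i r IH].
  rewrite big_nil /ipv big1 // => j _.
  rewrite (@intT_ext _ _ _ _ (fun _ => 0 * 0)); last by move=> t; rewrite big_nil mul0r mulr0.
  by rewrite intTZ ?mul0r //; exact: Int0.
rewrite big_cons -IH -ipvZl // -ipvDl //; try exact: L2v_sum; try exact: L2vZ.
by congr ipv; apply/funext => j; apply/funext => t; rewrite big_cons.
Qed.

Lemma ipv_comb x (I0 : Type) (r : seq I0) (c : I0 -> R) (z : I0 -> 'I_p -> R -> R) y :
  L2vec a b x -> (forall i, L2vec a b (z i)) -> L2vec a b y ->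
  ipv a b (fun j t => x j t - \sum_(i <- r) c i * z i j t) y
  = ipv a b x y - \sum_(i <- r) c i * ipv a b (z i) y.
Proof.
move=> Hx Hz Hy.
have -> : (fun j t => x j t - \sum_(i <- r) c i * z i j t) =
          (fun j t => x j t + (-1) * (\sum_(i <- r) c i * z i j t)).
  by apply/funext => j; apply/funext => t; rewrite mulN1r.
rewrite ipvDl //; last by apply: L2vZ; apply: L2v_sum.
rewrite ipvZl //; last exact: L2v_sum.
by rewrite ipv_suml // mulN1r.
Qed.

Lemma ipv_ge0 x : 0 <= ipv a b x x.
Proof. by apply: sumr_ge0 => j _; apply: intT_ge0 => t; rewrite -expr2 sqr_ge0. Qed.

Lemma ipv_null d y : L2vec a b d -> L2vec a b y -> ipv a b d d = 0 -> ipv a b d y = 0.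
Proof.
move=> Hd Hy H0.
set D := ipv a b d y; set Y := ipv a b y y.
have Y0 : 0 <= Y by apply: ipv_ge0.
have Hexp : forall s, ipv a b (fun j t => d j t + s * y j t) (fun j t => d j t + s * y j t)
   = 2 * s * D + s ^+ 2 * Y.
  move=> s; have Hz : L2vec a b (fun j t => d j t + s * y j t) by apply: L2vD => //; apply: L2vZ.
  have Hsy : L2vec a b (fun j t => s * y j t) by apply: L2vZ.
  rewrite ipvDl // ipvZl //.
  rewrite [ipv a b d _]ipv_sym ipvDl // ipvZl //.
  rewrite [ipv a b y (fun j t => d j t + _)]ipv_sym ipvDl // ipvZl //.
  rewrite H0 -/D -/Y [ipv a b y d]ipv_sym -/D; ring.
set u := Y + 1.
have u0 : 0 < u by rewrite /u; lra.
have := ipv_ge0 (fun j t => d j t + (- D / u) * y j t).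
rewrite Hexp => H.
have H2 : 0 <= (2 * (- D / u) * D + (- D / u) ^+ 2 * Y) * u ^+ 2 by apply: mulr_ge0 => //; apply: sqr_ge0.
have E : (2 * (- D / u) * D + (- D / u) ^+ 2 * Y) * u ^+ 2 = - (D ^+ 2) * (Y + 2).
  rewrite /u; field; rewrite -/u; exact: lt0r_neq0.
rewrite E in H2.
have : D ^+ 2 <= 0 by nra.
move=> HD; have : D ^+ 2 == 0 by rewrite eq_le HD sqr_ge0.
by rewrite expf_eq0 /= => /eqP.
Qed.

End Vec.


Section Main.
Variable R : realType.
Variables (a b : R) (m p : nat) (phi : 'I_m -> R -> R) (Srow : 'M[R]_p) (Scol : 'M[R]_m).
Hypothesis Hphi : forall i, L2fun a b (phi i).
Hypothesis HSr : Srow^T = Srow.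

Definition xm (F : 'M[R]_(m, p)) : 'I_p -> R -> R := fun j t => \sum_(i < m) F i j * phi i t.
Definition wm (y : 'I_p -> R -> R) : 'M[R]_(m, p) :=
  \matrix_(i, j) intT a b (fun t => phi i t * y j t).
Definition fro (U V : 'M[R]_(m, p)) := \tr (U^T *m V).
Definition Gm : 'M[R]_m := \matrix_(i, i') intT a b (fun t => phi i t * phi i' t).
Definition Tm (U : 'M[R]_(m, p)) := Scol *m U *m Srow.

Lemma froE U V : fro U V = \sum_(i < m) \sum_(j < p) U i j * V i j.
Proof.
rewrite /fro /mxtrace exchange_big /=; apply: eq_bigr => j _.
by rewrite !mxE; apply: eq_bigr => i _; rewrite !mxE.
Qed.

Lemma fro_sym U V : fro U V = fro V U.
Proof. by rewrite /fro -mxtrace_tr trmx_mul trmxK. Qed.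

Lemma L2v_xm F : L2vec a b (xm F).
Proof.
move=> j; apply: (@L2_sum _ _ _ _ _ (fun i t => F i j * phi i t)) => i.
exact: L2Z.
Qed.

Lemma ipv_xm F y : L2vec a b y -> ipv a b (xm F) y = fro F (wm y).
Proof.
move=> Hy; rewrite /ipv froE exchange_big /=; apply: eq_bigr => j _.
rewrite (@intT_ext _ _ _ _ (fun t => \sum_(i < m) F i j * (phi i t * y j t))); last first.
  by move=> t; rewrite /xm big_distrl; apply: eq_bigr => i _; rewrite mulrA.
rewrite intT_sum; last by move=> i; apply: IntZ; apply: L2_Int_mul.
apply: eq_bigr => i _; rewrite intTZ ?mxE //; exact: L2_Int_mul.
Qed.

Lemma wm_xm E : wm (xm E) = Gm *m E.
Proof.
apply/matrixP => i j; rewrite !mxE.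
rewrite (@intT_ext _ _ _ _ (fun t => \sum_(l < m) E l j * (phi i t * phi l t))); last first.
  by move=> t; rewrite /xm big_distrr; apply: eq_bigr => l _ /=; rewrite mulrCA.
rewrite intT_sum; last by move=> l; apply: IntZ; apply: L2_Int_mul.
apply: eq_bigr => l _; rewrite intTZ ?mxE ?[_ * E l j]mulrC //; exact: L2_Int_mul.
Qed.

Lemma Ssym i j : Srow i j = Srow j i.
Proof. by rewrite -[in LHS]HSr mxE. Qed.

Lemma covop_eq y : L2vec a b y ->
  covop a b (sepK Srow (kappa Scol phi)) y = xm (Tm (wm y)).
Proof.
move=> Hy; apply/funext => j; apply/funext => s.
rewrite /covop /xm.
have E1 : forall l, intT a b (fun t => sepK Srow (kappa Scol phi) s t j l * y l t)
   = \sum_(i < m) \sum_(i' < m) (phi i s * Scol i i' * Srow j l) * wm y i' l.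
  move=> l.
  rewrite (@intT_ext _ _ _ _ (fun t => \sum_(i < m) \sum_(i' < m)
       (phi i s * Scol i i' * Srow j l) * (phi i' t * y l t))); last first.
    move=> t; rewrite /sepK mxE /kappa big_distrl big_distrl /=; apply: eq_bigr => i _.
    rewrite big_distrl big_distrl /=; apply: eq_bigr => i' _; ring.
  rewrite intT_sum; last first.
    move=> i; apply: (@Int_sum _ _ _ _ _ (fun i' t => (phi i s * Scol i i' * Srow j l) * (phi i' t * y l t))).
    by move=> i'; apply: IntZ; apply: L2_Int_mul.
  apply: eq_bigr => i _; rewrite intT_sum; last by move=> i'; apply: IntZ; apply: L2_Int_mul.
  apply: eq_bigr => i' _; rewrite intTZ ?mxE //; exact: L2_Int_mul.
under eq_bigr do rewrite E1.
rewrite exchange_big /=; apply: eq_bigr => i _.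
rewrite !mxE big_distrl /=; apply: eq_bigr => l _.
rewrite !mxE big_distrl big_distrl /=; apply: eq_bigr => i' _.
rewrite !mxE Ssym; ring.
Qed.

End Main.
Arguments xm {R m p}. Arguments wm {R} a b {m p}. Arguments fro {R m p}.
Arguments Gm {R} a b {m}. Arguments Tm {R m p}.


Section LA.
Variable R : realType.
Variables (m p : nat) (Srow : 'M[R]_p) (Scol : 'M[R]_m) (lam : 'I_p -> R) (V : 'M[R]_p).
Hypothesis HSr : Srow^T = Srow.
Hypothesis PSr : posdef Srow.
Hypothesis HSc : Scol^T = Scol.
Hypothesis PSc : posdef Scol.
Hypothesis Heig : forall j, Srow *m col j V = lam j *: col j V.
Hypothesis HV : V^T *m V = 1%:M.

Lemma VVt : V *m V^T = 1%:M.
Proof. exact: mulmx1C. Qed.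

Lemma colV_norm j : ((col j V)^T *m col j V) 0 0 = 1.
Proof.
have H := congr1 (fun M : 'M[R]_p => M j j) HV; rewrite /= [X in _ = X]mxE eqxx mulr1n in H.
rewrite -H !mxE; apply: eq_bigr => l _; rewrite !mxE //.
Qed.

Lemma posdef_ge0 n (S : 'M[R]_n) (u : 'cV[R]_n) : posdef S -> 0 <= (u^T *m S *m u) 0 0.
Proof.
move=> PS; case: (eqVneq u 0) => [->|un0]; last exact/ltW/(PS _).
by rewrite mulmx0 mxE.
Qed.

Lemma posdef_eq0 n (S : 'M[R]_n) (u : 'cV[R]_n) : posdef S -> (u^T *m S *m u) 0 0 = 0 -> u = 0.
Proof.
move=> PS H; case: (eqVneq u 0) => // un0.
by have := PS u un0; rewrite H ltxx.
Qed.

Lemma lam_pos j : 0 < lam j.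
Proof.
have cn0 : col j V != 0.
  apply/eqP => c0; have := colV_norm j; rewrite c0 mulmx0 mxE => /eqP.
  by rewrite eq_sym oner_eq0.
have := PSr _ cn0; rewrite -mulmxA Heig -scalemxAr mxE colV_norm.
by rewrite mulr1.
Qed.

Definition Lam := diag_mx (\row_j lam j).
Definition Lami := diag_mx (\row_j (lam j)^-1).

Lemma SV : Srow = V *m Lam *m V^T.
Proof.
have E : Srow *m V = V *m Lam.
  apply/matrixP => i j; rewrite /Lam mul_mx_diag !mxE.
  have := congr1 (fun M : 'cV[R]_p => M i 0) (Heig j); rewrite /= !mxE mulrC => <-.
  by apply: eq_bigr => l _; rewrite !mxE.
by rewrite -E -mulmxA VVt mulmx1.
Qed.

Lemma Sri_mul : V *m Lami *m V^T *m Srow = 1%:M.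
Proof.
rewrite SV !mulmxA -[V *m Lami *m V^T *m V]mulmxA HV mulmx1.
rewrite -[V *m Lami *m Lam]mulmxA /Lami /Lam mulmx_diag.
have -> : (\row_j ((\row_j0 (lam j0)^-1) 0 j * (\row_j0 lam j0) 0 j)) = const_mx (1 : R).
  apply/rowP => j; rewrite !mxE mulVf //; exact: lt0r_neq0 (lam_pos j).
by rewrite diag_const_mx mulmx1 VVt.
Qed.

Lemma Srow_unit : Srow \in unitmx.
Proof. by case: (mulmx1_unit Sri_mul). Qed.

Lemma Sri_def : invmx Srow = V *m Lami *m V^T.
Proof.
by rewrite -[RHS]mulmx1 -(mulmxV Srow_unit) mulmxA Sri_mul mul1mx.
Qed.

Lemma unit_of_posdef n (S : 'M[R]_n) : posdef S -> S \in unitmx.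
Proof.
move=> PS; rewrite unitmxE unitfE; apply/negP => /det0P [v vn0 vS].
have : v^T != 0 by apply: contra vn0 => /eqP H; rewrite -[v]trmxK H trmx0.
move/(PS _); rewrite trmxK vS mul0mx mxE ltxx //.
Qed.

Lemma Scol_unit : Scol \in unitmx.
Proof. exact: unit_of_posdef. Qed.

Lemma quad_col (A : 'M[R]_(m, p)) (S : 'M[R]_m) j :
  (A^T *m S *m A) j j = ((col j A)^T *m S *m col j A) 0 0.
Proof.
rewrite !mxE; apply: eq_bigr => k _; rewrite !mxE; congr (_ * _).
by apply: eq_bigr => l _; rewrite !mxE.
Qed.

Lemma froT_expand U : fro (Tm Srow Scol U) U =
  \sum_(j < p) lam j * ((col j (U *m V))^T *m Scol *m col j (U *m V)) 0 0.
Proof.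
rewrite /fro /Tm !trmx_mul HSr HSc.
have -> : Srow *m (U^T *m Scol) *m U = V *m (Lam *m (V^T *m (U^T *m Scol *m U))).
  by rewrite SV !mulmxA.
rewrite mxtrace_mulC.
have -> : Lam *m (V^T *m (U^T *m Scol *m U)) *m V = Lam *m ((U *m V)^T *m Scol *m (U *m V)).
  by rewrite trmx_mul !mulmxA.
rewrite /Lam mul_diag_mx /mxtrace; apply: eq_bigr => j _.
by rewrite -quad_col [in LHS]mxE; congr (_ * _); rewrite mxE.
Qed.

Lemma T_ge0 U : 0 <= fro (Tm Srow Scol U) U.
Proof.
rewrite froT_expand; apply: sumr_ge0 => j _; apply: mulr_ge0.
  exact/ltW/lam_pos.
exact: posdef_ge0.
Qed.

Lemma T_eq0 U : fro (Tm Srow Scol U) U = 0 -> U = 0.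
Proof.
rewrite froT_expand => H.
have Hc : forall j, col j (U *m V) = 0.
  move=> j; apply: (@posdef_eq0 _ Scol _ PSc).
  have Hge : forall i : 'I_p, true -> 0 <= lam i * ((col i (U *m V))^T *m Scol *m col i (U *m V)) 0 0.
    by move=> i _; apply: mulr_ge0; [exact/ltW/lam_pos | exact: posdef_ge0].
  have := @psumr_eq0P _ _ _ _ Hge H j isT.
  by move=> /eqP; rewrite mulf_eq0 (negbTE (lt0r_neq0 (lam_pos j))) /= => /eqP.
have UV0 : U *m V = 0.
  by apply/matrixP => i j; have := congr1 (fun M : 'cV[R]_m => M i 0) (Hc j); rewrite !mxE.
by rewrite -[U]mulmx1 -VVt mulmxA UV0 mul0mx.
Qed.

Lemma T_inv_fro W D : fro (Tm Srow Scol W) (invmx Scol *m D *m invmx Srow) = fro W D.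
Proof.
rewrite /fro /Tm !trmx_mul HSr HSc.
rewrite -!mulmxA mxtrace_mulC -!mulmxA.
rewrite [Scol *m (invmx Scol *m _)]mulmxA (mulmxV Scol_unit) mul1mx.
by rewrite !mulmxA (mulmxKV Srow_unit).
Qed.

End LA.


Section Spec.
Variable R : realType.
Variables (a b : R) (m p : nat) (phi : 'I_m -> R -> R).
Variables (Srow : 'M[R]_p) (Scol : 'M[R]_m) (lam : 'I_p -> R) (V : 'M[R]_p).
Variables (psi : nat -> 'I_p -> R -> R) (pi : nat -> R).
Hypothesis Hphi : forall i, L2fun a b (phi i).
Hypothesis Hlin : lin_indep_L2 a b phi.
Hypothesis HSr : Srow^T = Srow.
Hypothesis PSr : posdef Srow.
Hypothesis HSc : Scol^T = Scol.
Hypothesis PSc : posdef Scol.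
Hypothesis Heig : forall j, Srow *m col j V = lam j *: col j V.
Hypothesis HV : V^T *m V = 1%:M.
Hypothesis Hsp : spectral_decomp a b (sepK Srow (kappa Scol phi)) psi pi.

Local Notation W i := (wm a b phi (psi i)).
Local Notation T := (Tm Srow Scol).
Local Notation G := (Gm a b phi).

Lemma Hpsi i : L2vec a b (psi i).
Proof. by case: Hsp. Qed.

Lemma L2vB (x y : 'I_p -> R -> R) : L2vec a b x -> L2vec a b y -> L2vec a b (fun j t => x j t - y j t).
Proof.
move=> Hx Hy.
have -> : (fun (j : 'I_p) t => x j t - y j t) = (fun j t => x j t + (-1) * y j t).
  by apply/funext => j; apply/funext => t; rewrite mulN1r.
by apply: L2vD => //; apply: L2vZ.
Qed.

Lemma E1 i {y} : L2vec a b y -> ipv a b (xm phi (T (W i))) y = pi i * ipv a b (psi i) y.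
Proof.
move=> Hy; case: Hsp => _ _ Heq _ _; have /= H0 := Heq i.
rewrite (@covop_eq _ a b m p phi Srow Scol Hphi HSr _ (Hpsi i)) in H0.
have ed : (fun j s => xm phi (T (W i)) j s - pi i * psi i j s)
        = (fun j s => xm phi (T (W i)) j s + (- pi i) * psi i j s).
  by apply/funext => j; apply/funext => s; rewrite mulNr.
rewrite ed in H0.
have Hd : L2vec a b (fun j s => xm phi (T (W i)) j s + (- pi i) * psi i j s).
  by apply: L2vD; [exact: L2v_xm | apply: L2vZ; exact: Hpsi].
have := @ipv_null _ a b p _ _ Hd Hy H0.
rewrite ipvDl //; [|exact: L2v_xm | apply: L2vZ; exact: Hpsi].
rewrite ipvZl //; last exact: Hpsi.
by move/eqP; rewrite mulNr subr_eq0 => /eqP.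
Qed.

Lemma E2 i i' : fro (T (W i)) (W i') = pi i * (i == i')%:R.
Proof.
have := E1 i (Hpsi i'); rewrite ipv_xm //; last exact: Hpsi.
by case: Hsp => _ Hon _ _ _; rewrite Hon.
Qed.

Lemma E3 i E : fro (T (W i)) (G *m E) = pi i * fro E (W i).
Proof.
have := E1 i (@L2v_xm _ a b m p phi Hphi E); rewrite ipv_xm //; last exact: L2v_xm.
rewrite wm_xm // => ->; rewrite ipv_sym ipv_xm //; exact: Hpsi.
Qed.


Lemma fro_sumZ n (U : 'M[R]_(m, p)) (k : 'I_n -> R) (X : 'I_n -> 'M[R]_(m, p)) :
  fro U (\sum_(l < n) k l *: X l) = \sum_(l < n) k l * fro U (X l).
Proof.
rewrite /fro mulmx_sumr raddf_sum; apply: eq_bigr => l _.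
by rewrite -scalemxAr; apply: mxtraceZ.
Qed.

Lemma fro0 (U : 'M[R]_(m, p)) : fro U 0 = 0.
Proof. by rewrite /fro mulmx0 mxtrace0. Qed.

Lemma pi_eq i : pi i = fro (T (W i)) (W i).
Proof. by rewrite E2 eqxx mulr1. Qed.

Lemma pi_ge0 i : 0 <= pi i.
Proof. rewrite pi_eq; exact: T_ge0. Qed.

Lemma W0 i : pi i = 0 -> W i = 0.
Proof. by rewrite pi_eq => H; apply: (@T_eq0 _ _ _ Srow Scol lam V HSr PSr HSc PSc Heig HV _ H). Qed.

Lemma pi_mono i n : pi (i + n) <= pi i.
Proof.
elim: n => [|n IH]; first by rewrite addn0.
case: Hsp => _ _ _ Hm _; apply: le_trans IH; rewrite addnS; exact: Hm.
Qed.

Lemma pi_big : pi (m * p) = 0.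
Proof.
apply/eqP; apply/negPn/negP => Hn0.
have Hpos : forall i, (i <= m * p)%N -> 0 < pi i.
  move=> i Hi; have Hlt : 0 < pi (m * p) by rewrite lt_def Hn0 pi_ge0.
  apply: lt_le_trans Hlt _; have := pi_mono i (m * p - i); by rewrite subnKC.
pose X := [tuple W (val i) | i < (m * p).+1].
have fX : free X.
  apply/freeP => k Hk i.
  have := congr1 (fro (T (W i))) Hk.
  have eX : forall l : 'I_(m * p).+1, X`_l = W l by move=> l; rewrite nth_mktuple.
  under eq_bigr do rewrite eX.
  rewrite fro_sumZ fro0 (bigD1 i) //= E2 eqxx mulr1 big1 ?addr0.
    move/eqP; rewrite mulf_eq0 => /orP[/eqP //|].
    by rewrite (negbTE (lt0r_neq0 (Hpos _ (ltn_ord i)))).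
  move=> l Hl; rewrite E2 (_ : (val i == val l) = false) ?mulr0 //.
  by apply/negbTE; apply: contra Hl => /eqP Hil; apply/eqP/val_inj.
have := dimvS (subvf <<X>>%VS); rewrite dimvf /dim /=.
move/eqP: fX => ->; rewrite size_tuple.
by rewrite ltnn.
Qed.

Lemma W_big i : (m * p <= i)%N -> W i = 0.
Proof.
move=> Hi; apply: W0; apply: le_anti; rewrite pi_ge0 andbT.
rewrite -pi_big -(subnKC Hi); exact: pi_mono.
Qed.

Lemma complete F E :
  fro F (G *m E) = \sum_(i < m * p) fro F (W i) * fro E (W i).
Proof.
pose c := fun i : 'I_(m * p) => fro F (W i).
pose y := fun j t => xm phi F j t - \sum_(i < m * p) c i * psi i j t.
have Hz : forall i : 'I_(m * p), L2vec a b (psi i) by move=> i; exact: Hpsi.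
have Hy : L2vec a b y.
  apply: L2vB; first exact: L2v_xm.
  exact: (@L2v_sum _ a b p _ (index_enum 'I_(m * p)) c (fun i : 'I_(m * p) => psi i) Hz).
have Hcomb : forall z, L2vec a b z -> ipv a b y z
    = ipv a b (xm phi F) z - \sum_(i < m * p) c i * ipv a b (psi i) z.
  move=> z Hz'; rewrite /y.
  exact: (@ipv_comb _ a b p (xm phi F) _ (index_enum 'I_(m * p)) c
             (fun i : 'I_(m * p) => psi i) z (L2v_xm _ _ _ _ _ _ Hphi F) Hz Hz').
have Horth : forall n, ipv a b y (psi n) = 0.
  move=> n; rewrite Hcomb; last exact: Hpsi.
  rewrite ipv_xm //; last exact: Hpsi.
  case: Hsp => _ Hon _ _ _.
  under eq_bigr do rewrite Hon.
  case: (ltnP n (m * p)) => Hn.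
    rewrite (bigD1 (Ordinal Hn)) //= eqxx mulr1 big1 ?addr0 ?subrr //.
    move=> i Hi; rewrite (_ : (nat_of_ord i == n) = false) ?mulr0 //.
    by apply/negbTE; apply: contra Hi => /eqP Hin; apply/eqP/val_inj.
  rewrite big1 ?subr0 ?W_big ?fro0 //.
  by move=> i _; rewrite ltn_eqF ?mulr0 // (leq_trans (ltn_ord i) Hn).
have Hyy : ipv a b y y = 0 by case: Hsp => _ _ _ _ Hc; apply: Hc.
have HE : L2vec a b (xm phi E) by exact: L2v_xm.
have := @ipv_null _ a b p _ _ Hy HE Hyy.
rewrite Hcomb // ipv_xm // wm_xm //.
under eq_bigr do rewrite ipv_sym ipv_xm //.
by move/eqP; rewrite subr_eq0 => /eqP.
Qed.

Lemma Gm_sym : G^T = G.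
Proof. by apply/matrixP => i j; rewrite !mxE; apply: intT_ext => t; rewrite mulrC. Qed.

Lemma intT_sq (c : 'I_m -> R) :
  intT a b (fun t => (\sum_(i < m) c i * phi i t) ^+ 2)
  = \sum_(i < m) \sum_(i' < m) c i * c i' * G i i'.
Proof.
rewrite (@intT_ext _ a b _ (fun t => \sum_(i < m) \sum_(i' < m) (c i * c i') * (phi i t * phi i' t))); last first.
  move=> t; rewrite expr2 big_distrl; apply: eq_bigr => i _ /=.
  rewrite big_distrr; apply: eq_bigr => i' _ /=; ring.
rewrite intT_sum; last first.
  move=> i; apply: (@Int_sum _ a b _ _ (fun i' t => (c i * c i') * (phi i t * phi i' t))).
  by move=> i'; apply: IntZ; apply: L2_Int_mul.
apply: eq_bigr => i _; rewrite intT_sum; last by move=> i'; apply: IntZ; apply: L2_Int_mul.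
apply: eq_bigr => i' _; rewrite intTZ ?mxE //; exact: L2_Int_mul.
Qed.

Lemma Gm_unit : G \in unitmx.
Proof.
rewrite unitmxE unitfE; apply/negP => /det0P [v vn0 vG].
have H : intT a b (fun t => (\sum_(i < m) v 0 i * phi i t) ^+ 2) = 0.
  rewrite intT_sq.
  transitivity ((v *m G *m v^T) 0 0); last by rewrite vG mul0mx mxE.
  rewrite mxE exchange_big; apply: eq_bigr => i' _; rewrite !mxE big_distrl.
  by apply: eq_bigr => i _; rewrite !mxE /= mulrAC.
move: vn0; rewrite (_ : v = 0) ?eqxx //.
by apply/rowP => i; rewrite mxE (Hlin _ H).
Qed.

Lemma Qformula D :
  \sum_(i < m * p) (pi i)^-1 * (ipv a b (xm phi D) (psi i)) ^+ 2
  = fro (invmx Scol *m D *m invmx Srow) D.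
Proof.
set Y := invmx Scol *m D *m invmx Srow.
pose X := invmx G *m Y.
have GX : G *m X = Y by rewrite /X mulmxA (mulmxV Gm_unit) mul1mx.
have HDX : forall i, fro D (W i) = pi i * fro X (W i).
  move=> i; rewrite -E3 GX /Y.
  rewrite (@T_inv_fro _ _ _ Srow Scol lam V) // fro_sym //.
transitivity (\sum_(i < m * p) fro X (W i) * fro D (W i)).
  apply: eq_bigr => i _; rewrite ipv_xm //; last exact: Hpsi.
  case: (eqVneq (pi i) 0) => Hpi.
    by rewrite (W0 _ Hpi) !fro0 mulr0 expr0n /= mulr0.
  rewrite HDX; field; exact: Hpi.
rewrite -complete -GX /fro [in RHS]trmx_mul Gm_sym.
by rewrite -mulmxA.
Qed.

End Spec.


Section Shap.
Variable R : realType.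
Variable p : nat.

Definition wS (S : {set 'I_p}) : R :=
  ((#|S|)`!%:R * ((p - #|S| - 1)`!)%:R / (p`!)%:R).

Lemma sub_notin (k : 'I_p) (A : {set 'I_p}) : (A \subset [set~ k]) = (k \notin A).
Proof.
apply/fintype.subsetP/idP => [H|H x xA].
  by apply/negP => /H; rewrite !inE eqxx.
by rewrite !inE; apply: contra H => /eqP <-.
Qed.

Lemma card_notin (k : 'I_p) (S : {set 'I_p}) : k \notin S -> (#|S| < p)%N.
Proof.
move=> kS; have H : S \subset [set~ k] by rewrite sub_notin.
have := subset_leq_card H; rewrite cardsC1 card_ord.
by case: p k S kS H => [[]|n] //= k S _ _ H; rewrite ltnS.
Qed.

Lemma W1 (k : 'I_p) : \sum_(S : {set 'I_p} | k \notin S) wS S = 1.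
Proof.
have p0 : (0 < p)%N by apply: leq_ltn_trans (leq0n k) (ltn_ord k).
rewrite (partition_big (fun S : {set 'I_p} => (inord #|S| : 'I_p.+1)) predT) //=.
have Hs : forall s : 'I_p.+1,
    \sum_(S : {set 'I_p} | (k \notin S) && (inord #|S| == s)) wS S
    = ('C(p.-1, s) * (s`! * (p - s - 1)`!))%:R / (p`!)%:R.
  move=> s.
  transitivity (\sum_(S : {set 'I_p} | (S \subset [set~ k]) && (#|S| == s))
                   (1 * (((s : nat)`!)%:R * ((p - s - 1)`!)%:R / (p`!)%:R) : R)).
    apply: eq_big => [S|S /andP[_ /eqP Hc]].
      rewrite sub_notin; congr andb; rewrite -(inj_eq val_inj) /= inordK //.
      by rewrite ltnS -[X in (_ <= X)%N](card_ord p) max_card.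
    by rewrite mul1r /wS -Hc inordK // ltnS -[X in (_ <= X)%N](card_ord p) max_card.
  rewrite -big_distrl /=.
  have -> : \sum_(i : {set 'I_p} | (i \subset [set~ k]) && (#|i| == s)) (1 : R)
      = (#|[set S : {set 'I_p} | (S \subset [set~ k]) & (#|S| == s)]|)%:R.
    by rewrite -sum1dep_card natr_sum.
  by rewrite cards_draws cardsC1 card_ord !natrM !mulrA.
under eq_bigr do rewrite Hs.
rewrite -mulr_suml -natr_sum big_ord_recr /= bin_small; last by rewrite prednK.
rewrite mul0n addn0.
have -> : \sum_(i < p) ('C(p.-1, i) * (i`! * (p - i - 1)`!))%N = \sum_(i < p) (p.-1)`!.
  apply: eq_bigr => i _; have Hi : (i <= p.-1)%N by rewrite -ltnS prednK.
  by rewrite (_ : (p - i - 1)%N = (p.-1 - i)%N) ?bin_fact // subnAC subn1.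
rewrite sum_nat_const card_ord -{1}(prednK p0) -factS prednK //.
by rewrite divff // pnatr_eq0 -lt0n fact_gt0.
Qed.

Lemma W2 (k l : 'I_p) : l != k ->
  \sum_(S : {set 'I_p} | k \notin S) wS S * (l \in S)%:R = 2^-1.
Proof.
move=> lk.
pose h := fun S : {set 'I_p} => ~: S :\ k.
have hk : forall S, k \notin h S by move=> S; rewrite !inE eqxx.
have hh : forall S : {set 'I_p}, k \notin S -> h (h S) = S.
  move=> S kS; apply/setP => x; rewrite !inE.
  case: (eqVneq x k) => [->|xk] /=; first by rewrite (negbTE kS).
  by rewrite negbK.
have hl : forall S : {set 'I_p}, (l \in h S) = (l \notin S) by move=> S; rewrite !inE lk.
have hw : forall S : {set 'I_p}, k \notin S -> wS (h S) = wS S.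
  move=> S kS; have sp := @card_notin k S kS.
  have Hc : #|h S| = (p - #|S| - 1)%N.
    have e1 := cardsD1 k (~: S); have e2 := cardsC S.
    rewrite card_ord in e2; rewrite !inE kS /= in e1.
    rewrite e1 in e2; move/(congr1 (fun n => n - #|S| - 1)%N): e2 => /= <-.
    by rewrite addKn add1n subn1.
  rewrite /wS Hc (_ : (p - (p - #|S| - 1) - 1)%N = #|S|); last by lia.
  by rewrite [X in X / _]mulrC.
have E : \sum_(S : {set 'I_p} | k \notin S) wS S * (l \in S)%:R
       = \sum_(S : {set 'I_p} | k \notin S) wS S * (l \notin S)%:R.
  rewrite (reindex_onto h h) //=; apply: eq_big => [S|S /andP[_ /eqP hhS]].
    rewrite hk /=; case: (boolP (k \in S)) => kS.
      by apply/negbTE; apply: contra (hk (h S)) => /eqP ->.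
    by rewrite hh // eqxx.
  have kS : k \notin S by rewrite -hhS hk.
  by rewrite hl hw.
have E2 : 2 * \sum_(S : {set 'I_p} | k \notin S) wS S * (l \in S)%:R = 1.
  rewrite mulr2n mulrDl mul1r {2}E -big_split /=.
  transitivity (\sum_(S : {set 'I_p} | k \notin S) wS S); last exact: W1.
  by apply: eq_bigr => S _; rewrite -mulrDr; case: (l \in S); rewrite /= ?addr0 ?add0r mulr1.
have n2 : (2 : R) != 0 by rewrite pnatr_eq0.
by apply: (mulfI n2); rewrite E2 divff.
Qed.

Definition vS (c : 'I_p -> 'I_p -> R) (S : {set 'I_p}) := \sum_(j in S) \sum_(l in S) c j l.

Lemma marg (c : 'I_p -> 'I_p -> R) (Hc : forall j l, c j l = c l j) (k : 'I_p) (S : {set 'I_p}) :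
  k \notin S -> vS c (k |: S) - vS c S = c k k + 2 * \sum_(l in S) c k l.
Proof.
move=> kS; rewrite /vS big_setU1 //= big_setU1 //=.
have E : \sum_(j in S) \sum_(l in k |: S) c j l = \sum_(j in S) (c j k + \sum_(l in S) c j l).
  by apply: eq_bigr => j _; rewrite big_setU1.
rewrite E.
rewrite big_split /=.
have -> : \sum_(j in S) c j k = \sum_(j in S) c k j by apply: eq_bigr => j _; rewrite Hc.
ring.
Qed.

Lemma shapley_quad (c : 'I_p -> 'I_p -> R) (Hc : forall j l, c j l = c l j) (k : 'I_p) :
  \sum_(S : {set 'I_p} | k \notin S) wS S * (vS c (k |: S) - vS c S) = \sum_l c k l.
Proof.
transitivity (\sum_(S : {set 'I_p} | k \notin S)
    (wS S * c k k + \sum_l 2 * c k l * (wS S * (l \in S)%:R))).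
  apply: eq_bigr => S kS; rewrite marg // mulrDr; congr (_ + _).
  rewrite big_mkcond /= !mulr_sumr; apply: eq_bigr => l _.
  by case: (l \in S); rewrite /= ?mulr1 ?mulr0; ring.
rewrite big_split /= -mulr_suml W1 mul1r exchange_big /=.
under eq_bigr => l _ do rewrite -mulr_sumr.
rewrite [RHS](bigD1 k) //= [X in _ + X = _](bigD1 k) //=.
rewrite big1 ?mulr0 ?add0r; last by move=> S kS; rewrite (negbTE kS) mulr0.
congr (_ + _); apply: eq_bigr => l lk; rewrite W2 // -mulrA mulrCA divff ?mulr1 //.
Qed.

End Shap.


Section Fin.
Variable R : realType.
Variables (m p : nat).

Definition PS (S : {set 'I_p}) : 'M[R]_p := diag_mx (\row_j (j \in S)%:R).

Lemma sum_ind (F : 'I_p -> R) (S : {set 'I_p}) :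
  \sum_(j in S) F j = \sum_j (j \in S)%:R * F j.
Proof.
rewrite big_mkcond; apply: eq_bigr => j _.
by case: (j \in S); rewrite /= ?mul1r ?mul0r.
Qed.

Lemma fro_DS (Dm : 'M[R]_(m, p)) (Sci : 'M[R]_m) (Sri : 'M[R]_p) (S : {set 'I_p}) :
  Sci^T = Sci -> Sri^T = Sri ->
  fro (Sci *m (Dm *m PS S) *m Sri) (Dm *m PS S)
  = @vS R p (fun j l : 'I_p => Sri j l * (Dm^T *m Sci *m Dm) l j) S.
Proof.
move=> Hci Hri.
rewrite /fro !trmx_mul Hci Hri /PS tr_diag_mx.
set P := diag_mx _.
have -> : Sri *m (P *m Dm^T *m Sci) *m (Dm *m P) = (Sri *m P *m (Dm^T *m Sci *m Dm)) *m P.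
  by rewrite !mulmxA.
rewrite mxtrace_mulC.
have -> : P *m (Sri *m P *m (Dm^T *m Sci *m Dm)) = (P *m Sri *m P) *m (Dm^T *m Sci *m Dm).
  by rewrite !mulmxA.
rewrite /vS sum_ind /mxtrace; apply: eq_bigr => j _.
rewrite sum_ind big_distrr [in LHS]mxE.
apply: eq_bigr => l _.
rewrite /P mul_mx_diag mul_diag_mx !mxE.
rewrite /=; ring.
Qed.

End Fin.
Arguments PS {R p}. Arguments fro_DS {R m p}. Arguments wS {R p}. Arguments vS {R p}. Arguments shapley_quad {R p}.

Theorem lemma6 (R : realType) (a b : R) (m p : nat)
  (phi : 'I_m -> R -> R) (A MA : 'M[R]_(m, p))
  (Srow : 'M[R]_p) (Scol : 'M[R]_m)
  (lam : 'I_p -> R) (V : 'M[R]_p)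
  (psi : nat -> 'I_p -> R -> R) (pi : nat -> R) (k : 'I_p) :
  a < b ->
  (forall i, L2fun a b (phi i)) ->
  lin_indep_L2 a b phi ->
  Srow^T = Srow -> posdef Srow ->
  Scol^T = Scol -> posdef Scol ->
  (forall j, Srow *m col j V = lam j *: col j V) ->
  V^T *m V = 1%:M ->
  spectral_decomp a b (sepK Srow (kappa Scol phi)) psi pi ->
  theta a b psi pi (m * p)%N
    (fun j t => \sum_(i < m) A i j * phi i t)
    (fun j t => \sum_(i < m) MA i j * phi i t) k
  = \sum_(j < p) (lam j)^-1 * V k j *
      ((col k (A - MA))^T *m invmx Scol *m (A - MA) *m col j V) 0 0.
Proof.
move=> ab Hphi Hlin HSr PSr HSc PSc Heig HV Hsp.
set Dm := A - MA.
set Sci := invmx Scol.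
set Sri := invmx Srow.
set B := Dm^T *m Sci *m Dm.
pose c := fun j l : 'I_p => Sri j l * B l j.
have Hci : Sci^T = Sci by rewrite /Sci trmx_inv HSc.
have Hri : Sri^T = Sri by rewrite /Sri trmx_inv HSr.
have Bsym : B^T = B by rewrite /B !trmx_mul trmxK Hci mulmxA.
have Hc : forall j l, c j l = c l j.
  by move=> j l; rewrite /c -[in LHS]Hri -[in LHS]Bsym !mxE.
have HS : forall S, fMMD2 a b psi pi (m * p) (hatX S (fun j t => \sum_(i < m) A i j * phi i t)
            (fun j t => \sum_(i < m) MA i j * phi i t)) (fun j t => \sum_(i < m) MA i j * phi i t)
          = vS c S.
  move=> S; rewrite /fMMD2.
  have -> : (fun j t => hatX S (fun j t => \sum_(i < m) A i j * phi i t)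
            (fun j t => \sum_(i < m) MA i j * phi i t) j t - \sum_(i < m) MA i j * phi i t)
            = xm phi (Dm *m PS S).
    apply/funext => j; apply/funext => t; rewrite /hatX /xm /PS mul_mx_diag.
    case: (boolP (j \in S)) => jS.
      by rewrite -sumrB; apply: eq_bigr => i _; rewrite !mxE jS /Dm /= mulr1 mulrBl.
    by rewrite subrr big1 // => i _; rewrite !mxE (negbTE jS) /= mulr0 mul0r.
  rewrite (@Qformula _ a b m p phi Srow Scol lam V psi pi) //.
  exact: fro_DS.
rewrite /theta.
transitivity (\sum_(S : {set 'I_p} | k \notin S) wS S * (vS c (k |: S) - vS c S)).
  by apply: eq_bigr => S _; rewrite !HS.
rewrite shapley_quad //.
have Ecol : forall j, ((col k Dm)^T *m Sci *m Dm *m col j V) 0 0 = (B *m V) k j.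
  move=> j; rewrite !mxE; apply: eq_bigr => l _; rewrite !mxE; congr (_ * _).
  apply: eq_bigr => b' _; rewrite !mxE; congr (_ * _).
  by apply: eq_bigr => a' _; rewrite !mxE.
under [RHS]eq_bigr do rewrite Ecol.
transitivity ((B *m Sri) k k).
  rewrite mxE; apply: eq_bigr => l _; rewrite /c -[in RHS]Bsym -[in RHS]Hri !mxE; ring.
rewrite /Sri (@Sri_def _ p Srow lam V) // !mulmxA mxE; apply: eq_bigr => j _.
rewrite /Lami mul_mx_diag !mxE; ring.
Qed.
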